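(* Let $\mathfrak{g}$ be a finite-dimensional real Lie algebra, $h\colon\mathfrak{g}^{*}\to\mathbb{R}$ smooth, and $\eta(q,p) := Dh(-\operatorname{ad}_{q}^{*}p)\in\mathfrak{g}$ for $(q,p)\in\mathfrak{g}\times\mathfrak{g}^{*}$. Consider the system $$\dot q = \operatorname{ad}_{\eta(q,p)}q,\qquad \dot p = -\operatorname{ad}_{\eta(q,p)}^{*}p$$ (the canonical Hamiltonian system on $T^{*}\mathfrak{g}$ with Hamiltonian $H(q,p) = h(-\operatorname{ad}_q^{*}p)$). Let $\kappa(x,y) = \operatorname{tr}(\operatorname{ad}_x\circ\operatorname{ad}_y)$ be the Killing form of $\mathfrak{g}$. Then $\kappa(q,q)$ is an invariant (conserved quantity) of this system.
   Context: $\operatorname{ad}_{x}y=[x,y]$, $\operatorname{ad}_{x}^{*}$ is its dual: $\langle \operatorname{ad}_{x}^{*}\alpha, y\rangle = \langle \alpha,[x,y]\rangle$. For smooth $f\colon\mathfrak{g}^{*}\to\mathbb{R}$, $Df(\mu)\in\mathfrak{g}$ is defined by $\langle\delta\mu, Df(\mu)\rangle = \frac{d}{ds}\big|_{s=0}f(\mu+s\delta\mu)$. *)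

(* Defs.v *)
From HB Require Import structures.
From mathcomp Require Import all_boot all_order all_algebra.
From mathcomp Require Import all_classical all_reals all_analysis.
Set Implicit Arguments. Unset Strict Implicit. Unset Printing Implicit Defensive.
Import Order.TTheory GRing.Theory Num.Theory.
Import numFieldNormedType.Exports.
Local Open Scope ring_scope.
Local Open Scope classical_set_scope.

(* A finite-dimensional real Lie algebra g of dimension n is modelled as the
   vector space 'rV[R]_n equipped with a bracket br.  The dual g^* is also
   modelled as 'rV[R]_n, with the pairing <alpha, x> = sum_i alpha_i x_i. *)

Definition is_lie_bracket (R : realType) (n : nat)
    (br : 'rV[R]_n -> 'rV[R]_n -> 'rV[R]_n) : Prop :=
  [/\ (forall (a : R) x y z, br (a *: x + y) z = a *: br x z + br y z),
      (forall (a : R) x y z, br z (a *: x + y) = a *: br z x + br z y),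
      (forall x, br x x = 0)
    & (forall x y z, br x (br y z) + br y (br z x) + br z (br x y) = 0)].

Definition pairing (R : realType) (n : nat) (alpha x : 'rV[R]_n) : R :=
  \sum_(i < n) alpha 0 i * x 0 i.

(* ad^*_x alpha, determined by <ad^*_x alpha, y> = <alpha, [x,y]>;
   its i-th coordinate is <alpha, [x, e_i]>. *)
Definition adstar (R : realType) (n : nat)
    (br : 'rV[R]_n -> 'rV[R]_n -> 'rV[R]_n) (x alpha : 'rV[R]_n) : 'rV[R]_n :=
  \row_(i < n) pairing alpha (br x (delta_mx 0 i)).

(* Df(mu) in g, determined by <dmu, Df(mu)> = d/ds f(mu + s dmu) at s = 0;
   its i-th coordinate is the directional derivative along e_i. *)
Definition Dfun (R : realType) (n : nat) (f : 'rV[R]_n -> R) (mu : 'rV[R]_n)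
  : 'rV[R]_n :=
  \row_(i < n) 'D_(delta_mx 0 i) f mu.

Definition killing (R : realType) (n : nat)
    (br : 'rV[R]_n -> 'rV[R]_n -> 'rV[R]_n) (x y : 'rV[R]_n) : R :=
  \tr (lin1_mx (br x \o br y)).

Fixpoint Ck (R : realType) (n : nat) (k : nat) (f : 'rV[R]_n -> R) : Prop :=
  match k with
  | 0 => continuous f
  | k'.+1 => continuous f /\ (forall x v, derivable f x v) /\
             (forall v, Ck k' ('D_v f))
  end.

Definition smooth (R : realType) (n : nat) (f : 'rV[R]_n -> R) : Prop :=
  forall k, Ck k f.

(* Main.v *)
Require Import Defs.
From HB Require Import structures.
From mathcomp Require Import all_boot all_order all_algebra.
From mathcomp Require Import all_classical all_reals all_analysis.
Import Order.TTheory GRing.Theory Num.Theory.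
Import numFieldNormedType.Exports.
Local Open Scope ring_scope.
Local Open Scope classical_set_scope.
Set Implicit Arguments. Unset Strict Implicit.

Lemma lin_sum (R : realType) (n : nat) (W : lmodType R) (f : 'rV[R]_n -> W)
  (hf : forall (a : R) x y, f (a *: x + y) = a *: f x + f y) m (c : 'I_m -> R) v :
  f (\sum_(j < m) c j *: v j) = \sum_(j < m) c j *: f (v j).
Proof.
have f0 : f 0 = 0.
  have := hf 1 0 0; rewrite !scale1r !addr0.
  by move=> /(congr1 (fun z => z - f 0)) /=; rewrite addrK subrr => <-.
elim: m c v => [|m IH] c v; first by rewrite !big_ord0.
rewrite !big_ord_recr /= addrC hf addrC; congr (_ + _); exact: IH.
Qed.

Definition Mad (R : realType) (n : nat) (br : 'rV[R]_n -> 'rV[R]_n -> 'rV[R]_n) x :=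
  lin1_mx (br x).

Lemma lin1_uniq (R : realType) (n : nat) (f : 'rV[R]_n -> 'rV[R]_n) A :
  (forall u, f u = u *m A) -> lin1_mx f = A.
Proof.
move=> H; apply/matrixP => i j; rewrite mxE H -rowE mxE //.
Qed.

Lemma brM (R : realType) (n : nat) br (hbr : @is_lie_bracket R n br) x u :
  br x u = u *m Mad br x.
Proof.
case: hbr => _ h2 _ _.
rewrite {1}(row_sum_delta u) (@lin_sum _ _ _ (br x)); last by move=> *; apply: h2.
apply/rowP => k; rewrite !mxE summxE; apply: eq_bigr => j _.
by rewrite !mxE.
Qed.

Lemma antisym (R : realType) (n : nat) br (hbr : @is_lie_bracket R n br) x y :
  br x y = - br y x.
Proof.
case: hbr => h1 h2 h3 _.
have add1 a b z : br (a + b) z = br a z + br b z by have := h1 1 a b z; rewrite !scale1r.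
have add2 z a b : br z (a + b) = br z a + br z b by have := h2 1 a b z; rewrite !scale1r.
have := h3 (x + y); rewrite add1 !add2 !h3 add0r addr0 => /eqP.
by rewrite addr_eq0 => /eqP.
Qed.

Lemma Mad_lin (R : realType) (n : nat) br (hbr : @is_lie_bracket R n br) (a : R) x y :
  Mad br (a *: x + y) = a *: Mad br x + Mad br y.
Proof.
case: hbr => h1 _ _ _.
by apply/matrixP => i j; rewrite !mxE h1 !mxE.
Qed.

Lemma Mad_br (R : realType) (n : nat) br (hbr : @is_lie_bracket R n br) x y :
  Mad br (br x y) = Mad br y *m Mad br x - Mad br x *m Mad br y.
Proof.
apply: lin1_uniq => u.
rewrite mulmxBr !mulmxA -!brM //.
have J := (let: And4 _ _ _ j := hbr in j) x y u.
rewrite (antisym hbr (br x y) u).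
rewrite (antisym hbr u x) in J.
have h2 := (let: And4 _ h _ _ := hbr in h).
have : br y (- br x u) = - br y (br x u).
  have := h2 (-1) (br x u) 0 y. rewrite addr0 scaleN1r => ->.
  have := h2 1 0 0 y; rewrite !scale1r !addr0.
  move=> /(congr1 (fun z => z - br y 0)) /=; rewrite addrK subrr => <-.
  by rewrite addr0 scaleN1r.
move=> E; rewrite E in J.
by apply/eqP; rewrite eq_sym -subr_eq0 opprK; apply/eqP; exact: J.
Qed.

Lemma killingE (R : realType) (n : nat) br (hbr : @is_lie_bracket R n br) x y :
  killing br x y = \tr (Mad br y *m Mad br x).
Proof.
rewrite /killing (@lin1_uniq _ _ _ (Mad br y *m Mad br x)) // => u /=.
by rewrite mulmxA -!brM.
Qed.
Lemma coord_is_derive (R : realType) (n : nat) (q : R -> 'rV[R]_n) t (j : 'I_n) :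
  derivable q t 1 -> is_derive t 1 (fun s => q s 0 j) ((derive1 q t) 0 j).
Proof.
move=> dq.
have H : (fun h => h^-1 *: ((q \o shift t) (h *: 1) - q t)) @ 0^' --> 'D_1 q t.
  exact: dq.
have H2 := cvg_comp _ _ H (@coord_continuous R 1 n 0 j ('D_1 q t)).
have E : (fun M : 'M[R]_(1, n) => M 0 j) \o (fun h => h^-1 *: ((q \o shift t) (h *: 1) - q t))
   = (fun h : R => h^-1 *: (((fun s => q s 0 j) \o shift t) (h *: 1) - q t 0 j)).
  by apply/funext => h /=; rewrite !mxE.
rewrite E in H2.
rewrite derive1E.
apply: DeriveDef; first by apply/cvg_ex; eexists; exact: H2.
exact: cvg_lim H2.
Qed.

Lemma is_derive_sum_fun (R : realType) m (h : 'I_m -> R -> R) (t : R) (dh : 'I_m -> R) :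
  (forall i, is_derive t 1 (h i) (dh i)) ->
  is_derive t 1 (fun s => \sum_(i < m) h i s) (\sum_(i < m) dh i).
Proof. by move=> H; have := is_derive_sum H; rewrite fct_sumE. Qed.

Lemma is_derive_mul_fun (R : realType) (f g : R -> R) (t : R) (df dg : R) :
  is_derive t 1 f df -> is_derive t 1 g dg ->
  is_derive t 1 (fun s => f s * g s) (f t * dg + g t * df).
Proof. by move=> H1 H2; have := is_deriveM H1 H2. Qed.

Lemma Mad_expand (R : realType) (n : nat) br (hbr : @is_lie_bracket R n br) x i k :
  Mad br x i k = \sum_(j < n) x 0 j * Mad br (delta_mx 0 j) i k.
Proof.
rewrite {1}(row_sum_delta x) (@lin_sum _ _ _ (Mad br)); last by move=> *; apply: Mad_lin.
by rewrite summxE; apply: eq_bigr => j _; rewrite mxE.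
Qed.

Lemma Mad_is_derive (R : realType) (n : nat) br (hbr : @is_lie_bracket R n br)
  (q : R -> 'rV[R]_n) (t : R) i k :
  derivable q t 1 ->
  is_derive t 1 (fun s => Mad br (q s) i k) (Mad br (derive1 q t) i k).
Proof.
move=> dq.
have -> : (fun s => Mad br (q s) i k) =
   (fun s => \sum_(j < n) q s 0 j * Mad br (delta_mx 0 j) i k).
  by apply/funext => s; rewrite Mad_expand.
rewrite Mad_expand //; apply: is_derive_sum_fun => j.
apply: is_derive_eq; first apply: is_derive_mul_fun.
all: try exact: coord_is_derive.
by rewrite /= mulr0 add0r mulrC.
Qed.

Lemma trace_comm_zero (R : realType) (n : nat) (A C : 'M[R]_n) :
  \tr (A *m (A *m C - C *m A)) = 0.
Proof.
rewrite mulmxBr linearB /= mxtrace_mulC mulmxA.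
rewrite [in X in _ - X]mxtrace_mulC -!mulmxA.
by rewrite !mulmxA mxtrace_mulC mulmxA subrr.
Qed.

Theorem proposition4p2 (R : realType) (n : nat)
    (br : 'rV[R]_n -> 'rV[R]_n -> 'rV[R]_n) (hbr : is_lie_bracket br)
    (h : 'rV[R]_n -> R) (hsmooth : smooth h)
    (I : set R) (hIint : is_interval I) (hIopen : open I)
    (q p : R -> 'rV[R]_n)
    (hq : forall t, I t ->
       let eta := Dfun h (- adstar br (q t) (p t)) in
       derivable q t 1 /\ derive1 q t = br eta (q t))
    (hp : forall t, I t ->
       let eta := Dfun h (- adstar br (q t) (p t)) in
       derivable p t 1 /\ derive1 p t = - adstar br eta (p t)) :
  forall s t, I s -> I t -> killing br (q s) (q s) = killing br (q t) (q t).
Proof.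
pose F := fun s => killing br (q s) (q s).
have dF : forall x, I x -> is_derive x 1 F 0.
  move=> x Ix; have [dq Eq] := hq x Ix.
  have -> : F = (fun s => \sum_(i < n) \sum_(k < n)
        (Mad br (q s) i k * Mad br (q s) k i)).
    apply/funext => s; rewrite /F killingE // /mxtrace.
    by apply: eq_bigr => i _; rewrite mxE.
  apply: is_derive_eq.
    apply: is_derive_sum_fun => i; apply: is_derive_sum_fun => k.
    apply: is_derive_mul_fun; exact: Mad_is_derive.
  set A := Mad br (q x); set B := Mad br (derive1 q x).
  have HB : B = A *m Mad br (Dfun h (- adstar br (q x) (p x)))
               - Mad br (Dfun h (- adstar br (q x) (p x))) *m A.
    by rewrite /B Eq Mad_br.
  have T1 : \tr (A *m B) = 0 by rewrite HB trace_comm_zero.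
  have T2 : \tr (B *m A) = 0 by rewrite mxtrace_mulC.
  transitivity (\tr (A *m B) + \tr (B *m A)); last by rewrite T1 T2 addr0.
  rewrite /mxtrace -big_split /=.
  apply: eq_bigr => i _; rewrite !mxE -big_split /=.
  by apply: eq_bigr => k _; rewrite [_ * B i k]mulrC.
have key : forall s t, I s -> I t -> s <= t -> F s = F t.
  move=> s t Is It le.
  have Isub : forall x, s <= x <= t -> I x by move=> x; apply: hIint.
  have H1 : forall x, x \in `]s, t[%R -> is_derive x 1 F 0.
    move=> x; rewrite in_itv /= => /andP[a b]; apply: dF; apply: Isub.
    by rewrite !ltW.
  have H2 : {within [set` `[s, t]%R], continuous F}.
    apply: continuous_in_subspaceT => x /set_mem /=; rewrite in_itv /= => xin.
    have [d _] := dF x (Isub x xin).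
    exact/differentiable_continuous/derivable1_diffP.
  have [c _ E] := @MVT_segment R F (fun _ => 0) s t le H1 H2.
  by apply/eqP; rewrite eq_sym -subr_eq0 E mul0r.
move=> s t Is It.
case: (leP s t) => [le|/ltW le]; first exact: key.
by apply/esym/key.
Qed.
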